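(* Let $(X,d)$ be a compact metric space and $f:X\to X$ continuous such that $f|_{CR(f)}$ has the shadowing property. Let $(x,y)\in CR(f)^2$ with $x\ne y$ and $x\sim y$. Then for every $0<\epsilon<\frac12 d(x,y)$ there is an integer $a>0$ such that $h(f,\{X\setminus \overline{B}... \})$; precisely, $h(f,\{X\setminus B_\epsilon(x), X\setminus B_\epsilon(y)\})\ge a^{-1}\log 2>0$, and consequently $(x,y)\in E(X,f)$.
   Context: $B_\epsilon(p)$ is the open $\epsilon$-ball about $p$ (so $\{X\setminus B_\epsilon(x),X\setminus B_\epsilon(y)\}$ is a closed cover; entropy relative to it is defined as for open covers via $\lim_n\frac1n\log$ of the minimal cardinality of subcovers of the joins $\bigvee_{i=0}^{n-1}f^{-i}\mathcal U$). A $\delta$-chain of $f$ is a finite sequence $(x_i)_{i=0}^k$, $k\ge1$, with $d(f(x_i),x_{i+1})\le\delta$; a $\delta$-cycle is a $\delta$-chain with $x_0=x_k$. $CR(f)$ is the set of points $x$ such that for every $\delta>0$ there is a $\delta$-cycle starting and ending at $x$. For $x,y\in CR(f)$, $x\sim y$ iff for every $\delta>0$ there are integers $m>0$, $N>0$ such that for every $n\ge N$ there are $\delta$-chains $(x_i)_{i=0}^{mn},(y_i)_{i=0}^{mn}$ in $CR(f)$ with $x_0=y_{mn}=x$, $x_{mn}=y_0=y$. Shadowing property of $g:Y\to Y$: for every $\epsilon>0$ there is $\delta>0$ such that every $\delta$-pseudo orbit $(y_i)_{i\ge 0}$ ($d(g(y_i),y_{i+1})\le\delta$) is $\epsilon$-shadowed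 by some $y\in Y$ ($d(g^i(y),y_i)\le\epsilon$ for all $i$). An entropy pair is $(x,y)$, $x\ne y$, such that for all disjoint closed neighborhoods $A\ni x$, $B\ni y$, $h(f,\{X\setminus A,X\setminus B\})>0$; $E(X,f)$ is the set of entropy pairs. *)

(* Defs.v *)
From Stdlib Require Import Reals Lra Lia List.
Open Scope R_scope.

Section Dyn.
Context {X : Type} (d : X -> X -> R).

Definition is_metric : Prop :=
  (forall x y, 0 <= d x y) /\
  (forall x y, d x y = 0 <-> x = y) /\
  (forall x y, d x y = d y x) /\
  (forall x y z, d x z <= d x y + d y z).

Definition ball (p : X) (r : R) : X -> Prop := fun z => d p z < r.

Definition is_open (U : X -> Prop) : Prop :=
  forall x, U x -> exists r, 0 < r /\ forall z, ball x r z -> U z.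

Definition is_closed (A : X -> Prop) : Prop := is_open (fun z => ~ A z).

Definition compact_space : Prop :=
  forall (I : Type) (U : I -> X -> Prop),
    (forall i, is_open (U i)) -> (forall x, exists i, U i x) ->
    exists l : list I, forall x, exists i, In i l /\ U i x.

Definition continuous (f : X -> X) : Prop :=
  forall x eps, 0 < eps -> exists delta, 0 < delta /\
    forall z, d x z < delta -> d (f x) (f z) < eps.

Definition chain (f : X -> X) (delta : R) (s : nat -> X) (k : nat) : Prop :=
  (1 <= k)%nat /\ forall i, (i < k)%nat -> d (f (s i)) (s (S i)) <= delta.

Definition CR (f : X -> X) (x : X) : Prop :=
  forall delta, 0 < delta -> exists s k, chain f delta s k /\ s 0%nat = x /\ s k = x.

Definition chain_rel (f : X -> X) (x y : X) : Prop :=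
  forall delta, 0 < delta -> exists m N : nat, (0 < m)%nat /\ (0 < N)%nat /\
    forall n, (N <= n)%nat ->
      exists sx sy : nat -> X,
        chain f delta sx (m * n) /\ chain f delta sy (m * n) /\
        (forall i, (i <= m * n)%nat -> CR f (sx i) /\ CR f (sy i)) /\
        sx 0%nat = x /\ sx (m * n)%nat = y /\ sy 0%nat = y /\ sy (m * n)%nat = x.

Definition shadowing_on_CR (f : X -> X) : Prop :=
  forall eps, 0 < eps -> exists delta, 0 < delta /\
    forall ys : nat -> X,
      (forall i, CR f (ys i)) ->
      (forall i, d (f (ys i)) (ys (S i)) <= delta) ->
      exists y, CR f y /\ forall i, d (Nat.iter i f y) (ys i) <= eps.

(* Covers are finite lists of subsets. An element of the join
   \/_{i=0}^{n-1} f^{-i} U is indexed by a word w : nat -> nat with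
   w i < length U for i < n; it is the set of z with f^i z in U_{w i}. *)
Definition word_ok (U : list (X -> Prop)) (n : nat) (w : nat -> nat) : Prop :=
  forall i, (i < n)%nat -> (w i < length U)%nat.

Definition join_member (f : X -> X) (U : list (X -> Prop)) (n : nat)
  (w : nat -> nat) : X -> Prop :=
  fun z => forall i, (i < n)%nat -> nth (w i) U (fun _ => True) (Nat.iter i f z).

Definition join_subcover_card (f : X -> X) (U : list (X -> Prop)) (n k : nat) : Prop :=
  exists ws : list (nat -> nat), length ws = k /\
    (forall w, In w ws -> word_ok U n w) /\
    forall z, exists w, In w ws /\ join_member f U n w z.

Definition min_subcover_card (f : X -> X) (U : list (X -> Prop)) (n k : nat) : Prop :=
  join_subcover_card f U n k /\ forall k', join_subcover_card f U n k' -> (k <= k')%nat.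

Definition cover_entropy (f : X -> X) (U : list (X -> Prop)) (h : R) : Prop :=
  exists N : nat -> nat,
    (forall n, min_subcover_card f U n (N n)) /\
    Un_cv (fun n => ln (INR (N (S n))) / INR (S n)) h.

Definition closed_nbhd (A : X -> Prop) (p : X) : Prop :=
  is_closed A /\ exists r, 0 < r /\ forall z, ball p r z -> A z.

Definition entropy_pair (f : X -> X) (x y : X) : Prop :=
  x <> y /\
  forall A B : X -> Prop,
    closed_nbhd A x -> closed_nbhd B y -> (forall z, A z -> B z -> False) ->
    exists h, cover_entropy f ((fun z => ~ A z) :: (fun z => ~ B z) :: nil) h /\ 0 < h.

End Dyn.

(* Main.v *)
Require Import Defs.
From Stdlib Require Import Reals Lra Lia List Classical ClassicalEpsilon ZArith.
Open Scope R_scope.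

Lemma nat_large (r : R) : exists n : nat, r < INR n.
Proof.
  destruct (archimed r) as [H1 _].
  exists (Z.to_nat (up r)). pose proof (pos_INR (Z.to_nat (up r))). rewrite INR_IZR_INZ in *.
  destruct (Z.le_gt_cases 0 (up r)).
  - rewrite Z2Nat.id; auto.
  - apply IZR_lt in H0. simpl in H0. lra.
Qed.

Lemma ln_le' x y : 0 < x -> x <= y -> ln x <= ln y.
Proof. intros. destruct (Rle_lt_or_eq_dec _ _ H0). left; apply ln_increasing; auto. subst; lra. Qed.

Lemma fekete (b : nat -> R) : (forall n, 0 <= b n) ->
  (forall m n, b (m+n)%nat <= b m + b n) ->
  exists l, Un_cv (fun n => b (S n) / INR (S n)) l.
Proof.
  intros Hpos Hsub.
  set (E := fun r => exists n, r = - (b (S n) / INR (S n))).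
  assert (HposS : forall n, 0 < INR (S n)) by (intro; apply lt_0_INR; lia).
  assert (Hu0 : forall n, 0 <= b (S n) / INR (S n)).
  { intro n. unfold Rdiv. apply Rmult_le_pos; auto. left; apply Rinv_0_lt_compat; auto. }
  assert (Hb : bound E).
  { exists 0. intros r [n ->]. specialize (Hu0 n). lra. }
  assert (Hne : exists r, E r) by (exists (- (b 1%nat / INR 1)); exists 0%nat; reflexivity).
  destruct (completeness E Hb Hne) as [m0 [Hub Hlub]].
  set (L := - m0).
  assert (Hlow : forall n, L <= b (S n) / INR (S n)).
  { intro n. assert (E (- (b (S n) / INR (S n)))) by (exists n; auto).
    specialize (Hub _ H). unfold L. lra. }
  assert (Happ : forall eps, 0 < eps -> exists n, b (S n) / INR (S n) < L + eps).
  { intros eps He. apply NNPP. intro Hno.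
    assert (is_upper_bound E (m0 - eps)).
    { intros r [n ->]. assert (~ b (S n) / INR (S n) < L + eps) by (intro; apply Hno; eauto).
      unfold L in H. lra. }
    specialize (Hlub _ H). lra. }
  assert (Hsmall : forall r, b r <= b 0%nat + INR r * b 1%nat).
  { induction r. simpl. lra. replace (S r) with (1 + r)%nat by lia.
    rewrite plus_INR. specialize (Hsub 1%nat r). simpl INR. simpl INR in Hsub. lra. }
  exists L. intros eps He.
  destruct (Happ (eps/2)) as [n0 Hn0]; [lra|].
  set (q := S n0) in *.
  set (t := b q / INR q) in *.
  assert (Hq : 0 < INR q) by apply HposS.
  assert (Ht0 : 0 <= t) by apply Hu0.
  assert (Hmul : forall k r, b (k*q + r)%nat <= INR k * b q + b r).
  { induction k; intros r. simpl. lra.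
    replace (S k * q + r)%nat with (q + (k*q+r))%nat by lia.
    rewrite S_INR. specialize (Hsub q (k*q+r)%nat). specialize (IHk r). lra. }
  set (M := b 0%nat + INR q * b 1%nat).
  assert (HM : 0 <= M) by (unfold M; generalize (Hpos 0%nat) (Hpos 1%nat); nra).
  assert (HMr : forall r, (r < q)%nat -> b r <= M).
  { intros r Hr. specialize (Hsmall r). unfold M. apply lt_INR in Hr.
    generalize (Hpos 1%nat); nra. }
  destruct (nat_large (2 * M / eps)) as [N1 HN1].
  exists N1. intros n Hn. unfold R_dist.
  set (Rn := INR (S n)).
  assert (HRn : 0 < Rn) by apply HposS.
  assert (HRnbig : 2 * M / eps < Rn).
  { unfold Rn. apply Rlt_le_trans with (INR N1); auto. apply le_INR; lia. }
  assert (HMsmall : M / Rn < eps / 2).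
  { apply (Rmult_lt_reg_r Rn); auto. unfold Rdiv at 1. rewrite Rmult_assoc, Rinv_l by lra.
    apply (Rmult_lt_compat_r (eps/2)) in HRnbig; [|lra].
    replace (2 * M / eps * (eps / 2)) with M in HRnbig by (field; lra). lra. }
  assert (Hupper : b (S n) / Rn <= t + M / Rn).
  { assert (Hqn : q <> 0%nat) by (unfold q; lia).
    pose proof (Nat.div_mod (S n) q Hqn) as Hdm.
    pose proof (Nat.mod_upper_bound (S n) q Hqn) as Hmb.
    set (k := (S n / q)%nat) in *. set (r := (S n mod q)%nat) in *.
    assert (Hkq : INR k * INR q <= Rn).
    { unfold Rn. rewrite <- mult_INR. apply le_INR. lia. }
    assert (Hbn : b (S n) <= Rn * t + M).
    { rewrite Hdm. replace (q * k + r)%nat with (k*q + r)%nat by lia.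
      eapply Rle_trans. apply Hmul.
      assert (b q = t * INR q) by (unfold t; field; lra).
      rewrite H. specialize (HMr r Hmb).
      assert (INR k * (t * INR q) <= Rn * t).
      { replace (INR k * (t * INR q)) with ((INR k * INR q) * t) by ring.
        apply Rmult_le_compat_r; auto. }
      lra. }
    replace (t + M / Rn) with ((Rn * t + M) / Rn) by (field; lra).
    unfold Rdiv. apply Rmult_le_compat_r; auto. left; apply Rinv_0_lt_compat; auto. }
  specialize (Hlow n). fold Rn in Hlow, Hupper |- *.
  apply Rabs_def1; lra.
Qed.

Lemma ex_min (P : nat -> Prop) : (exists n, P n) -> exists n, P n /\ forall k, P k -> (n <= k)%nat.
Proof.
  intros [n Hn]. revert Hn. induction n as [n IH] using (well_founded_induction lt_wf).
  intros Hn. destruct (classic (exists k, P k /\ (k < n)%nat)) as [[k [Pk Hk]]|Hno].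
  - exact (IH k Hk Pk).
  - exists n. split; auto. intros k Pk. destruct (le_lt_dec n k); auto. exfalso; apply Hno; eauto.
Qed.

Definition comb (m : nat) (w1 w2 : nat -> nat) : nat -> nat :=
  fun i => if Nat.ltb i m then w1 i else w2 (i - m)%nat.

Section Cov.
Variables (X : Type) (d : X -> X -> R) (f : X -> X) (A B : X -> Prop).
Hypothesis HAB : forall z, A z -> B z -> False.
Let U := (fun z => ~ A z) :: (fun z => ~ B z) :: nil.

Lemma join_mul m n k1 k2 : join_subcover_card f U m k1 -> join_subcover_card f U n k2 ->
  join_subcover_card f U (m+n) (k1*k2).
Proof.
  intros [ws1 [L1 [O1 C1]]] [ws2 [L2 [O2 C2]]].
  exists (flat_map (fun w1 => map (comb m w1) ws2) ws1). split; [|split].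
  - subst k1 k2. clear. induction ws1; simpl; auto.
    rewrite length_app, length_map, IHws1. reflexivity.
  - intros w Hw. apply in_flat_map in Hw as [w1 [H1 H2]].
    apply in_map_iff in H2 as [w2 [<- H3]].
    intros i Hi. unfold comb. destruct (Nat.ltb_spec i m). apply O1; auto. apply O2; auto; lia.
  - intros z. destruct (C1 z) as [w1 [H1 M1]]. destruct (C2 (Nat.iter m f z)) as [w2 [H2 M2]].
    exists (comb m w1 w2). split. apply in_flat_map. exists w1. split; auto. apply in_map; auto.
    intros i Hi. unfold comb. destruct (Nat.ltb_spec i m). apply M1; auto.
    assert (E : Nat.iter i f z = Nat.iter (i-m) f (Nat.iter m f z)) by (rewrite <- Nat.iter_add; f_equal; lia).
    rewrite E. apply M2. lia.
Qed.

Lemma cover0 : join_subcover_card f U 0 1.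
Proof.
  exists ((fun _ => 0%nat) :: nil). split; [reflexivity|split].
  - intros w _ i Hi; lia.
  - intros z. exists (fun _ => 0%nat). split. left; auto. intros i Hi; lia.
Qed.

Lemma cover1 : join_subcover_card f U 1 2.
Proof.
  exists ((fun _ => 0%nat) :: (fun _ => 1%nat) :: nil). split; [reflexivity|split].
  - intros w [<-|[<-|[]]] i Hi; simpl; lia.
  - intros z. destruct (classic (A z)).
    + exists (fun _ => 1%nat). split. right; left; auto.
      intros i Hi. assert (i = 0%nat) by lia. subst. simpl. intro; eauto.
    + exists (fun _ => 0%nat). split. left; auto.
      intros i Hi. assert (i = 0%nat) by lia. subst. simpl. auto.
Qed.

Lemma cover_ex n : exists k, join_subcover_card f U n k.
Proof.
  induction n. exists 1%nat; apply cover0.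
  destruct IHn as [k Hk]. exists (k*2)%nat. replace (S n) with (n+1)%nat by lia.
  apply join_mul; auto. apply cover1.
Qed.

Lemma min_exists n : exists k, min_subcover_card f U n k.
Proof. apply ex_min. apply cover_ex. Qed.

Definition Nf n := proj1_sig (constructive_indefinite_description _ (min_exists n)).
Lemma Nf_spec n : min_subcover_card f U n (Nf n).
Proof. unfold Nf. destruct (constructive_indefinite_description _ _); auto. Qed.

Variable x0 : X.
Lemma Nf_pos n : (1 <= Nf n)%nat.
Proof.
  destruct (Nf_spec n) as [[ws [L [_ C]]] _]. destruct (C x0) as [w [Hw _]].
  destruct ws; [destruct Hw|]. simpl in L. lia.
Qed.

Lemma Nf_sub m n : (Nf (m+n) <= Nf m * Nf n)%nat.
Proof.
  destruct (Nf_spec (m+n)) as [_ H]. apply H. apply join_mul; apply Nf_spec.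
Qed.

Definition bN n := ln (INR (Nf n)).
Lemma bN_pos n : 0 <= bN n.
Proof.
  unfold bN. rewrite <- ln_1. destruct (Rle_lt_or_eq_dec 1 (INR (Nf n))).
  - apply (le_INR 1). apply Nf_pos.
  - left; apply ln_increasing; lra.
  - rewrite e; lra.
Qed.

Lemma bN_sub m n : bN (m+n) <= bN m + bN n.
Proof.
  unfold bN. rewrite <- ln_mult. 2,3: apply lt_0_INR; apply Nf_pos.
  rewrite <- mult_INR. pose proof (Nf_sub m n). pose proof (Nf_pos (m+n)).
  apply le_INR in H. apply (lt_INR 0) in H0.
  destruct (Rle_lt_or_eq_dec _ _ H). left; apply ln_increasing; auto. rewrite e; lra.
Qed.
End Cov.

Fixpoint allb (k : nat) : list (list bool) :=
  match k with
  | O => nil :: nil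
  | S k => map (cons true) (allb k) ++ map (cons false) (allb k)
  end.

Lemma allb_len k : length (allb k) = (2 ^ k)%nat.
Proof. induction k; simpl; auto. rewrite length_app, !length_map, IHk. lia. Qed.

Lemma allb_in k l : In l (allb k) -> length l = k.
Proof.
  revert l; induction k; simpl; intros l H.
  - destruct H as [<-|[]]; auto.
  - apply in_app_or in H. destruct H as [H|H]; apply in_map_iff in H as [l' [<- H]]; simpl; auto.
Qed.

Lemma allb_full k l : length l = k -> In l (allb k).
Proof.
  revert l; induction k; simpl; intros l H.
  - destruct l; simpl in H; [left; auto | lia].
  - destruct l as [|b l]; simpl in H; [lia|]. apply in_or_app.
    destruct b; [left|right]; apply in_map; apply IHk; lia.
Qed.

Lemma NoDup_cons_map (b : bool) l : NoDup l -> NoDup (map (cons b) l).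
Proof.
  intro H. apply NoDup_map_NoDup_ForallPairs; auto.
  intros u v _ _ E. injection E; auto.
Qed.

Lemma allb_nodup k : NoDup (allb k).
Proof.
  induction k; simpl. constructor. intros []. constructor.
  apply NoDup_app; try apply NoDup_cons_map; auto.
  intros u H1 H2. apply in_map_iff in H1 as [l1 [<- _]]. apply in_map_iff in H2 as [l2 [E _]].
  discriminate.
Qed.

Lemma map_nth_seq_bool (l : list bool) : map (fun j => nth j l false) (seq 0 (length l)) = l.
Proof.
  induction l; simpl; auto. f_equal. rewrite <- seq_shift, map_map. simpl. exact IHl.
Qed.

Section Low.
Variables (X : Type) (d : X -> X -> R) (f : X -> X).

Definition cat (L : nat) (c1 c2 : nat -> X) : nat -> X :=
  fun t => if Nat.leb t L then c1 t else c2 (t - L)%nat.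

Lemma cat_le L c1 c2 t : (t <= L)%nat -> cat L c1 c2 t = c1 t.
Proof. intro H. unfold cat. destruct (Nat.leb_spec t L); auto; lia. Qed.

Lemma cat_ge L c1 c2 t : c1 L = c2 0%nat -> (L <= t)%nat -> cat L c1 c2 t = c2 (t - L)%nat.
Proof.
  intros E H. unfold cat. destruct (Nat.leb_spec t L); auto.
  assert (t = L) by lia. subst. rewrite E. f_equal; lia.
Qed.

Definition goodblk (delta : R) (a : nat) (p q : X) (c : nat -> X) : Prop :=
  c 0%nat = p /\ c a = q /\ (forall t, (t < a)%nat -> d (f (c t)) (c (S t)) <= delta) /\
  (forall t, (t <= a)%nat -> CR d f (c t)).

Lemma cat_good delta L p q r c1 c2 : (1 <= L)%nat -> goodblk delta L p q c1 -> goodblk delta L q r c2 ->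
  goodblk delta (L+L) p r (cat L c1 c2).
Proof.
  intros HL [A1 [B1 [C1 D1]]] [A2 [B2 [C2 D2]]].
  assert (E : c1 L = c2 0%nat) by congruence.
  split; [|split; [|split]].
  - rewrite cat_le by lia. auto.
  - rewrite cat_ge by (auto; lia). replace (L + L - L)%nat with L by lia. auto.
  - intros t Ht. destruct (Nat.lt_ge_cases t L).
    + rewrite !cat_le by lia. auto.
    + rewrite !cat_ge by (auto; lia). replace (S t - L)%nat with (S (t - L)) by lia. apply C2; lia.
  - intros t Ht. destruct (Nat.le_gt_cases t L).
    + rewrite cat_le by lia. auto.
    + rewrite cat_ge by (auto; lia). apply D2; lia.
Qed.

Variables (x y : X).
Definition pt (b : bool) : X := if b then y else x.

Lemma blocks_ex delta : 0 < delta -> chain_rel d f x y ->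
  exists a (blk : bool -> bool -> nat -> X), (0 < a)%nat /\
    forall p q, goodblk delta a (pt p) (pt q) (blk p q).
Proof.
  intros Hd Hsim. destruct (Hsim delta Hd) as [m [N [Hm [HN Hch]]]].
  destruct (Hch N (le_n _)) as [sx1 [sy1 [Cx1 [Cy1 [CR1 [E1 [E2 [E3 E4]]]]]]]].
  destruct (Hch (2*N)%nat ltac:(lia)) as [sx2 [sy2 [Cx2 [Cy2 [CR2 [F1 [F2 [F3 F4]]]]]]]].
  set (L := (m*N)%nat) in *.
  assert (HL : (1 <= L)%nat) by (unfold L; nia).
  assert (Ha : (m * (2*N) = L + L)%nat) by (unfold L; lia).
  rewrite Ha in *.
  assert (G1 : goodblk delta L x y sx1) by (destruct Cx1; repeat split; auto; intros; apply CR1; auto).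
  assert (G2 : goodblk delta L y x sy1) by (destruct Cy1; repeat split; auto; intros; apply CR1; auto).
  assert (G3 : goodblk delta (L+L) x y sx2) by (destruct Cx2; repeat split; auto; intros; apply CR2; auto).
  assert (G4 : goodblk delta (L+L) y x sy2) by (destruct Cy2; repeat split; auto; intros; apply CR2; auto).
  exists (L+L)%nat.
  exists (fun p q => match p, q with
                  | false, true => sx2 | true, false => sy2
                  | false, false => cat L sx1 sy1 | true, true => cat L sy1 sx1 end).
  split. lia. intros [|] [|]; simpl; auto; eapply cat_good; eauto.
Qed.

Lemma shadow_blocks delta eps' a (blk : bool -> bool -> nat -> X) :
  (0 < a)%nat -> (forall p q, goodblk delta a (pt p) (pt q) (blk p q)) ->
  (forall ys : nat -> X, (forall i, CR d f (ys i)) ->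
      (forall i, d (f (ys i)) (ys (S i)) <= delta) ->
      exists y, CR d f y /\ forall i, d (Nat.iter i f y) (ys i) <= eps') ->
  forall s : nat -> bool, exists z, forall j, d (Nat.iter (a*j) f z) (pt (s j)) <= eps'.
Proof.
  intros Ha Hblk Hsh s.
  set (ys := fun i => blk (s (i / a)%nat) (s (S (i / a))) (i mod a)%nat).
  assert (Ha0 : a <> 0%nat) by lia.
  assert (Hspec : forall j t, (t < a)%nat -> ys (a*j + t)%nat = blk (s j) (s (S j)) t).
  { intros j t Ht. unfold ys.
    rewrite <- (Nat.div_unique (a*j+t) a j t Ht eq_refl).
    rewrite <- (Nat.mod_unique (a*j+t) a j t Ht eq_refl). reflexivity. }
  assert (Hdec : forall i, exists j t, (t < a)%nat /\ i = (a*j+t)%nat).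
  { intro i. exists (i / a)%nat, (i mod a)%nat. split. apply Nat.mod_upper_bound; auto.
    apply Nat.div_mod; auto. }
  destruct (Hsh ys) as [z [_ Hz]].
  - intro i. destruct (Hdec i) as [j [t [Ht ->]]]. rewrite Hspec by auto.
    destruct (Hblk (s j) (s (S j))) as [_ [_ [_ H]]]. apply H; lia.
  - intro i. destruct (Hdec i) as [j [t [Ht ->]]]. rewrite Hspec by auto.
    destruct (Hblk (s j) (s (S j))) as [H0 [H1 [H2 _]]].
    destruct (Nat.lt_ge_cases (S t) a).
    + replace (S (a*j+t)) with (a*j + S t)%nat by lia. rewrite Hspec by auto. apply H2; auto.
    + assert (S t = a) by lia.
      replace (S (a*j+t)) with (a*(S j) + 0)%nat by nia. rewrite Hspec by auto.
      destruct (Hblk (s (S j)) (s (S (S j)))) as [H0' _]. rewrite H0'. rewrite <- H1.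
      rewrite <- H3. apply H2. lia.
  - exists z. intro j. specialize (Hz (a*j)%nat). replace (a*j)%nat with (a*j+0)%nat in Hz at 2 by lia.
    rewrite Hspec in Hz by auto. destruct (Hblk (s j) (s (S j))) as [H0 _]. rewrite H0 in Hz. auto.
Qed.
End Low.

Lemma lower_count (X : Type) (d : X -> X -> R) (f : X -> X)
  (Hsym : forall u v, d u v = d v u) (Hshadow : shadowing_on_CR d f)
  (x y : X) (Hsim : chain_rel d f x y) (A B : X -> Prop) (eps : R) (He : 0 < eps)
  (HA : forall z, ball d x eps z -> A z) (HB : forall z, ball d y eps z -> B z) :
  exists a, (0 < a)%nat /\ forall k K,
    join_subcover_card f ((fun z => ~ A z) :: (fun z => ~ B z) :: nil) (a*k) K -> (2^k <= K)%nat.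
Proof.
  destruct (Hshadow (eps/2)) as [delta [Hd Hsh]]; [lra|].
  destruct (blocks_ex X d f x y delta Hd Hsim) as [a [blk [Ha Hblk]]].
  exists a. split; auto. intros k K [ws [Hlen [Hok Hcov]]].
  set (g := fun w : nat -> nat => map (fun j => Nat.eqb (w (a*j)%nat) 0) (seq 0 k)).
  rewrite <- Hlen, <- (length_map g), <- allb_len. apply NoDup_incl_length. apply allb_nodup.
  intros l Hl. pose proof (allb_in _ _ Hl) as Hll.
  destruct (shadow_blocks X d f x y delta (eps/2) a blk Ha Hblk Hsh (fun j => nth j l false)) as [z Hz].
  destruct (Hcov z) as [w [Hw Hm]]. apply in_map_iff. exists w. split; auto.
  unfold g. transitivity (map (fun j => nth j l false) (seq 0 k)).
  2: { rewrite <- Hll; apply map_nth_seq_bool. }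
  apply map_ext_in. intros j Hj. apply in_seq in Hj.
  assert (Hlt : (a*j < a*k)%nat) by nia.
  specialize (Hm _ Hlt). specialize (Hok w Hw _ Hlt). simpl in Hok.
  specialize (Hz j). simpl in Hz.
  destruct (nth j l false); simpl in Hz.
  - assert (HBp : B (Nat.iter (a*j) f z)) by (apply HB; unfold ball; rewrite Hsym; lra).
    destruct (w (a*j)%nat) as [|[|n]]; simpl in Hm |- *; auto; try contradiction; try lia.
  - assert (HAp : A (Nat.iter (a*j) f z)) by (apply HA; unfold ball; rewrite Hsym; lra).
    destruct (w (a*j)%nat) as [|[|n]]; simpl in Hm |- *; auto; try contradiction; try lia.
Qed.

Lemma gen_entropy (X : Type) (d : X -> X -> R) (f : X -> X)
  (Hsym : forall u v, d u v = d v u) (Hshadow : shadowing_on_CR d f)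
  (x y : X) (Hsim : chain_rel d f x y) (A B : X -> Prop)
  (HAB : forall z, A z -> B z -> False) (eps : R) (He : 0 < eps)
  (HA : forall z, ball d x eps z -> A z) (HB : forall z, ball d y eps z -> B z) :
  exists a : nat, (0 < a)%nat /\
    exists h, cover_entropy f ((fun z => ~ A z) :: (fun z => ~ B z) :: nil) h
              /\ h >= ln 2 / INR a /\ 0 < h.
Proof.
  destruct (lower_count X d f Hsym Hshadow x y Hsim A B eps He HA HB) as [a [Ha Hlow]].
  destruct (fekete (bN X f A B HAB) (bN_pos X f A B HAB x) (bN_sub X f A B HAB x)) as [h Hh].
  assert (Hln2 : 0 < ln 2) by (rewrite <- ln_1; apply ln_increasing; lra).
  assert (HaR : 0 < INR a) by (apply lt_0_INR; auto).
  assert (Hge : h >= ln 2 / INR a).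
  { apply Rnot_lt_ge. intro Hc.
    destruct (Hh (ln 2 / INR a - h)) as [N0 HN0]; [lra|].
    set (k := S N0).
    specialize (HN0 (a*k - 1)%nat ltac:(unfold k; nia)).
    replace (S (a*k-1)) with (a*k)%nat in HN0 by (unfold k; nia).
    assert (Hk : (2^k <= Nf X f A B HAB (a*k))%nat) by (apply Hlow; apply Nf_spec).
    assert (Hb : INR k * ln 2 <= bN X f A B HAB (a*k)).
    { unfold bN. rewrite <- ln_pow by lra. apply ln_le'. apply pow_lt; lra.
      replace 2 with (INR 2) by (simpl; lra). rewrite <- pow_INR. apply le_INR; auto. }
    assert (HkR : 0 < INR k) by (apply lt_0_INR; unfold k; lia).
    assert (Hu : ln 2 / INR a <= bN X f A B HAB (a*k) / INR (a*k)).
    { rewrite mult_INR. replace (ln 2 / INR a) with (INR k * ln 2 / (INR a * INR k)) by (field; lra).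
      unfold Rdiv. apply Rmult_le_compat_r; auto. left; apply Rinv_0_lt_compat; nra. }
    unfold R_dist in HN0. apply Rabs_def2 in HN0. lra. }
  exists a. split; auto. exists h. split; [|split; auto].
  - exists (Nf X f A B HAB). split. intro n; apply Nf_spec. exact Hh.
  - apply Rlt_le_trans with (ln 2 / INR a); [|lra]. unfold Rdiv. apply Rmult_lt_0_compat; auto.
    apply Rinv_0_lt_compat; auto.
Qed.

Theorem mainTheorem8 (X : Type) (d : X -> X -> R) (f : X -> X)
  (Hmetric : is_metric d) (Hcompact : compact_space d)
  (Hcont : continuous d f) (Hshadow : shadowing_on_CR d f)
  (x y : X) (HxCR : CR d f x) (HyCR : CR d f y) (Hxy : x <> y)
  (Hsim : chain_rel d f x y) :
  (forall eps, 0 < eps -> eps < d x y / 2 ->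
     exists a : nat, (0 < a)%nat /\
       exists h, cover_entropy f
                   ((fun z => ~ ball d x eps z) :: (fun z => ~ ball d y eps z) :: nil) h
                 /\ h >= ln 2 / INR a /\ 0 < h)
  /\ entropy_pair d f x y.
Proof.
  destruct Hmetric as [Hnn [Hz [Hsym Htri]]].
  split.
  - intros eps He Hlt.
    apply (gen_entropy X d f Hsym Hshadow x y Hsim (ball d x eps) (ball d y eps)) with (eps := eps); auto.
    intros z H1 H2. unfold ball in *. pose proof (Htri x z y). rewrite (Hsym z y) in H. lra.
  - split; auto. intros A B [_ [rA [HrA HA]]] [_ [rB [HrB HB]]] HAB.
    destruct (gen_entropy X d f Hsym Hshadow x y Hsim A B HAB (Rmin rA rB)) as [a [_ [h [H1 [_ H3]]]]].
    + apply Rmin_pos; auto.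
    + intros z Hb. apply HA. unfold ball in *. pose proof (Rmin_l rA rB). lra.
    + intros z Hb. apply HB. unfold ball in *. pose proof (Rmin_r rA rB). lra.
    + exists h; auto.
Qed.
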